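(* Let $\widehat{\mathbf Y}$ be an optimal solution of the SDP, $\gamma=\|\widehat{\mathbf Y}-\mathbf Y^*\|_1$, and $S_4=\langle\widehat{\mathbf Y}-\mathbf Y^*,\mathbb E\,\mathbf H\mathbf H^\top\rangle$. For $a,b\in[k]$ let $T_{ab}=\sum_{i\in C^*_a,\,j\in C^*_b}(\widehat{\mathbf Y}-\mathbf Y^* )_{ij}$. Then \[ S_4=-\frac12\sum_{a\ne b}T_{ab}\Delta_{ab}^2\le-\frac14\Delta^2\gamma. \]
   Context: Model: integers $n\ge 4$, $k\ge 2$ with $k\mid n$; centers $\boldsymbol\mu_1,\dots,\boldsymbol\mu_k\in\mathbb R^d$; labels $\sigma^*:[n]\to[k]$ with clusters $C^*_a=\{i:\sigma^*(i)=a\}$ of size $n/k$; observations $\mathbf h_i=\boldsymbol\mu_{\sigma^*(i)}+\mathbf g_i$ with $\mathbf g_i$ independent, mean-zero sub-Gaussian random vectors. $\mathbf H\in\mathbb R^{n\times d}$ has $i$-th row $\mathbf h_i^\top$. $\Delta_{ab}=\|\boldsymbol\mu_a-\boldsymbol\mu_b\|_2$, $\Delta=\min_{a\ne b}\Delta_{ab}$. SDP: $A_{ij}=\|\mathbf h_i-\mathbf h_j\|_2^2$; $\widehat{\mathbf Y}$ minimizes $\langle\mathbf Y,\mathbf A\rangle$ subject to $\mathbf Y\mathbf 1_n=\frac nk\mathbf 1_n$, $\mathbf Y\succeq0$, $\mathrm{diag}(\mathbf Y)=\mathbf 1_n$, $\mathbf Y\ge0$. $Y^*_{ij}=\mathbb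 1\{\sigma^*(i)=\sigma^*(j)\}$; $\|\cdot\|_1$ entrywise $\ell_1$ norm. *)

(* Defs.v *)
From HB Require Import structures.
From mathcomp Require Import all_boot all_order all_algebra.
From mathcomp Require Import all_classical all_reals all_analysis.
Set Implicit Arguments. Unset Strict Implicit. Unset Printing Implicit Defensive.
Import Order.TTheory GRing.Theory Num.Theory.
Import numFieldNormedType.Exports.
Local Open Scope classical_set_scope.
Local Open Scope ring_scope.

Section Defs.
Variables (R : realType) (n k d : nat).

Definition frob (Y A : 'M[R]_n) : R := \sum_(i < n) \sum_(j < n) Y i j * A i j.

Definition l1norm (Y : 'M[R]_n) : R := \sum_(i < n) \sum_(j < n) `|Y i j|.

Definition psd (Y : 'M[R]_n) : Prop :=
  Y^T = Y /\ forall x : 'cV[R]_n, 0 <= (x^T *m Y *m x) 0 0.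

Definition sdp_feasible (Y : 'M[R]_n) : Prop :=
  [/\ forall i, \sum_(j < n) Y i j = n%:R / k%:R,
      psd Y,
      forall i, Y i i = 1 &
      forall i j, 0 <= Y i j].

Definition sdp_optimal (A Y : 'M[R]_n) : Prop :=
  sdp_feasible Y /\ forall Y', sdp_feasible Y' -> frob Y A <= frob Y' A.

Definition Ystar (sigma : 'I_n -> 'I_k) : 'M[R]_n :=
  \matrix_(i, j) (sigma i == sigma j)%:R.

Definition sqdist (mu : 'I_k -> 'I_d -> R) (a b : 'I_k) : R :=
  \sum_(l < d) (mu a l - mu b l) ^+ 2.

Definition Dist (mu : 'I_k -> 'I_d -> R) (a b : 'I_k) : R :=
  Num.sqrt (sqdist mu a b).

(* Delta = min_{a != b} Delta_ab.  The iterated min is seeded with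
   max_{a,b} Delta_ab (an upper bound of all Delta_ab), so for k >= 2 this is
   exactly the minimum over pairs a != b. *)
Definition Dist_max (mu : 'I_k -> 'I_d -> R) : R :=
  \big[Num.max/0]_(a < k) \big[Num.max/0]_(b < k) Dist mu a b.
Definition Dist_min (mu : 'I_k -> 'I_d -> R) : R :=
  \big[Num.min/Dist_max mu]_(a < k) \big[Num.min/Dist_max mu]_(b < k | b != a)
     Dist mu a b.

Definition Tblock (sigma : 'I_n -> 'I_k) (D : 'M[R]_n) (a b : 'I_k) : R :=
  \sum_(i < n | sigma i == a) \sum_(j < n | sigma j == b) D i j.

End Defs.

Section Prob.
Variables (R : realType) (dT : measure_display) (T : measurableType dT)
          (P : probability T R) (n k d : nat).

Definition obs (mu : 'I_k -> 'I_d -> R) (sigma : 'I_n -> 'I_k)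
  (g : 'I_n -> 'I_d -> T -> R) (i : 'I_n) (l : 'I_d) (w : T) : R :=
  mu (sigma i) l + g i l w.

Definition Hmat mu sigma g (w : T) : 'M[R]_(n, d) :=
  \matrix_(i, l) obs mu sigma g i l w.

Definition Amat mu sigma g (w : T) : 'M[R]_n :=
  \matrix_(i, j) \sum_(l < d) (obs mu sigma g i l w - obs mu sigma g j l w) ^+ 2.

(* E[H H^T], entry (i,j) = E[<h_i, h_j>] (finite under the model assumptions) *)
Definition EHHt mu sigma g : 'M[R]_n :=
  \matrix_(i, j) fine ('E_P[fun w => (Hmat mu sigma g w *m (Hmat mu sigma g w)^T) i j])%E.

Definition rv_family (g : 'I_n -> 'I_d -> T -> R) : Prop :=
  forall i l, measurable_fun setT (g i l).

Definition mean_zero (g : 'I_n -> 'I_d -> T -> R) : Prop :=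
  forall i l, ('E_P[g i l] = 0)%E.

Definition gen_sigma (g : 'I_n -> 'I_d -> T -> R) (i : 'I_n) : set (set T) :=
  <<s [set A | exists l B, measurable B /\ A = g i l @^-1` B] >>.

Definition independent_vectors (g : 'I_n -> 'I_d -> T -> R) : Prop :=
  forall A : 'I_n -> set T, (forall i, gen_sigma g i (A i)) ->
    P (\bigcap_(i in setT) A i) = (\prod_(i < n) P (A i))%E.

(* sub-Gaussian random vector: all one-dimensional marginals <u, X>, ||u|| = 1,
   have psi_2 norm at most some K > 0 *)
Definition subgaussian_vec (X : 'I_d -> T -> R) : Prop :=
  exists K : R, 0 < K /\
    forall u : 'I_d -> R, \sum_(l < d) u l ^+ 2 = 1 ->
      ('E_P[fun w => expR ((\sum_(l < d) u l * X l w) ^+ 2 / K ^+ 2)] <= 2%:E)%E.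

End Prob.

(* Main.v *)
Require Import Defs.
From HB Require Import structures.
From mathcomp Require Import all_boot all_order all_algebra.
From mathcomp Require Import all_classical all_reals all_analysis.
From mathcomp Require Import measurable_realfun.
From mathcomp Require Import ring lra.
Import Order.TTheory GRing.Theory Num.Theory.
Local Open Scope ring_scope.

Module Helpers.
Import numFieldNormedType.Exports.
Local Open Scope classical_set_scope.
Local Open Scope ring_scope.

Section indep.
Local Open Scope ereal_scope.
Context d (T : measurableType d) (R : realType) (P : probability T R).
Variables X Y : {mfun T >-> R}.
Hypothesis indep : forall B C, measurable B -> measurable C ->
  P (X @^-1` B `&` Y @^-1` C) = P (X @^-1` B) * P (Y @^-1` C).
Hypothesis iXY : P.-integrable setT (fun w => (X w * Y w)%:E).
Hypothesis iY : P.-integrable setT (fun w => (Y w)%:E).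
Hypothesis EY0 : \int[P]_w (Y w)%:E = 0.

Let Zf := fun w => (X w, Y w).
Let mZ : measurable_fun setT Zf.
Proof. exact: measurable_fun_pair. Qed.
Let Z : {mfun T >-> (R * R)%type} := mfun_Sub (mem_set mZ).
Let f := fun z : (R * R)%type => ((z.1 * z.2)%R)%:E.
Let mf : measurable_fun [set: (R * R)%type] f.
Proof. apply: measurableT_comp => //; exact: measurable_funM. Qed.

Let eqm : forall A, measurable A -> A `<=` setT ->
   distribution P Z A = (distribution P X \x distribution P Y) A.
Proof.
move=> A mA _; apply/esym/product_measure_unique.
  move=> B C mB mC.
  by rewrite /= /distribution /pushforward -indep.
done.
Qed.

Let iZf : P.-integrable (Z @^-1` setT) (f \o Z).
Proof. by rewrite preimage_setT. Qed.

Let ipf : (distribution P Z).-integrable setT f.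
Proof. exact: (integrable_pushforward mZ mf iZf measurableT). Qed.

Let ipf2 : (distribution P X \x distribution P Y).-integrable setT f.
Proof.
move/integrableP: ipf => [_ h]; apply/integrableP; split => //.
by rewrite -(eq_measure_integral _ eqm).
Qed.

Let iy : (distribution P Y).-integrable setT EFin.
Proof.
by apply: (integrable_pushforward (measurable_funP Y)) => //; rewrite ?preimage_setT.
Qed.

Let Ey : \int[distribution P Y]_y y%:E = 0.
Proof.
by rewrite (integral_pushforward (measurable_funP Y)) //= ?preimage_setT.
Qed.

Lemma indep_mul0 : \int[P]_w (X w * Y w)%:E = 0.
Proof.
have -> : \int[P]_w (X w * Y w)%:E = \int[distribution P Z]_z f z.
  by rewrite (integral_pushforward mZ mf iZf measurableT) // preimage_setT.
rewrite (eq_measure_integral _ eqm) /=.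
rewrite -(integral12_prod_meas1 ipf2).
rewrite /fubini_F.
under eq_integral => x _.
  rewrite /f /=.
  under eq_integral do rewrite EFinM.
  rewrite integralZl // Ey mule0.
  over.
by rewrite integral0.
Qed.
End indep.

Lemma absle1 (R : realType) (x : R) : `|x| <= 1 + x ^+ 2.
Proof. rewrite -real_normK ?num_real //; have := normr_ge0 x; nra. Qed.

Lemma absle2 (R : realType) (x y : R) : `|x * y| <= x ^+ 2 + y ^+ 2.
Proof.
rewrite normrM -(real_normK (num_real x)) -(real_normK (num_real y)).
have := normr_ge0 x; have := normr_ge0 y; nra.
Qed.

Section moments.
Local Open Scope ereal_scope.
Context d (T : measurableType d) (R : realType) (P : probability T R).

Lemma int_of_sq (X : T -> R) : measurable_fun setT X ->
  P.-integrable setT (fun w => (X w ^+ 2)%:E) ->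
  P.-integrable setT (fun w => (X w)%:E).
Proof.
move=> mX iX2.
have i1 : P.-integrable setT (fun w => (cst 1%R w)%:E).
  exact: (finite_measure_integrable_cst P 1%R measurableT).
apply: (@le_integrable _ _ _ _ _ measurableT _ (fun w => (1 + X w ^+ 2)%:E)).
- exact: measurableT_comp.
- move=> w _ /=; rewrite lee_fin (@ger0_norm _ (_ + _)); last by rewrite addr_ge0 // sqr_ge0.
  exact: absle1.
- exact: (integrableD measurableT i1 iX2).
Qed.

Lemma int_of_sq2 (X Y : T -> R) : measurable_fun setT X -> measurable_fun setT Y ->
  P.-integrable setT (fun w => (X w ^+ 2)%:E) ->
  P.-integrable setT (fun w => (Y w ^+ 2)%:E) ->
  P.-integrable setT (fun w => (X w * Y w)%:E).
Proof.
move=> mX mY iX iY.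
apply: (@le_integrable _ _ _ _ _ measurableT _ (fun w => (X w ^+ 2 + Y w ^+ 2)%:E)).
- apply: measurableT_comp => //; exact: measurable_funM.
- move=> w _ /=; rewrite lee_fin (@ger0_norm _ (_ + _)); last by rewrite addr_ge0 // sqr_ge0.
  exact: absle2.
- exact: (integrableD measurableT iX iY).
Qed.

End moments.

Lemma sum_delta (R : ringType) (m : nat) (i : 'I_m) (f : 'I_m -> R) :
  \sum_(j < m) (j == i)%:R * f j = f i.
Proof.
rewrite (bigD1 i) //= eqxx mul1r big1 ?addr0 // => j /negbTE ->; by rewrite mul0r.
Qed.

Lemma sq_int_of_subg (R : realType) (dT : measure_display) (T : measurableType dT)
  (P : probability T R) (d : nat) (X : 'I_d -> T -> R) (l : 'I_d) :
  (forall l, measurable_fun setT (X l)) -> subgaussian_vec P X ->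
  P.-integrable setT (fun w => (X l w ^+ 2)%:E).
Proof.
move=> mX [K [K0 hK]].
pose u := fun l' : 'I_d => ((l' == l)%:R : R).
have su : \sum_(l' < d) u l' ^+ 2 = 1.
  rewrite -[RHS](@sum_delta _ _ l (fun _ => 1)); apply: eq_bigr => l' _.
  by rewrite /u; case: (l' == l); rewrite ?expr1n ?expr0n ?mulr1.
have hE := hK u su.
rewrite unlock in hE.
have hw : forall w, \sum_(l' < d) u l' * X l' w = X l w.
  by move=> w; rewrite /u sum_delta.
move: hE; under eq_integral do rewrite hw; move=> hE.
have mX2 : measurable_fun setT (fun w => X l w ^+ 2).
  exact: measurable_funX.
have mq : measurable_fun setT (fun w => X l w ^+ 2 / K ^+ 2).
  exact: measurable_funM.
have iq : P.-integrable setT (fun w => (X l w ^+ 2 / K ^+ 2)%:E).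
  apply/integrableP; split; first exact: measurableT_comp.
  apply: (le_lt_trans _ (le_lt_trans hE (ltry _))).
  apply: ge0_le_integral => //.
  - by apply: measurableT_comp => //; apply: measurableT_comp.
  - apply: measurableT_comp => //.
    by apply: measurableT_comp; [exact: measurable_expR | exact: mq].
  - move=> w _ /=; rewrite lee_fin ger0_norm; last by rewrite divr_ge0 // sqr_ge0.
    by apply: le_trans (expR_ge1Dx _); rewrite lerDr.
apply: (eq_integrable _ (fun w => ((K ^+ 2)%:E * (X l w ^+ 2 / K ^+ 2)%:E)%E)) => //.
  move=> w _; rewrite -EFinM mulrC divfK //; by rewrite expf_neq0 // gt_eqF.
exact: integrableZl.
Qed.

Lemma pair_indep (R : realType) (dT : measure_display) (T : measurableType dT)
  (P : probability T R) (n d : nat) (g : 'I_n -> 'I_d -> T -> R) (i j : 'I_n) (l : 'I_d) :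
  independent_vectors P g -> i != j -> forall B C, measurable B -> measurable C ->
  (P (g i l @^-1` B `&` g j l @^-1` C) = P (g i l @^-1` B) * P (g j l @^-1` C))%E.
Proof.
move=> hI ij B C mB mC.
pose A := fun m : 'I_n => if m == i then g i l @^-1` B else if m == j then g j l @^-1` C else setT.
have hA : forall m, gen_sigma g m (A m).
  move=> m; rewrite /A; case: ifPn => [/eqP ->|mi].
    by apply: sub_sigma_algebra; exists l, B.
  case: ifPn => [/eqP ->|mj].
    by apply: sub_sigma_algebra; exists l, C.
  have [h0 hC _] := smallest_sigma_algebra setT [set A | exists l B, measurable B /\ A = g m l @^-1` B].
  by rewrite -(setD0 setT); apply: hC.
have ji : (j == i) = false by rewrite eq_sym (negbTE ij).
have := hI A hA.
have -> : \bigcap_(m in setT) A m = g i l @^-1` B `&` g j l @^-1` C.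
  apply/seteqP; split.
    move=> w hw; split.
      by have := hw i I; rewrite /A eqxx.
    by have := hw j I; rewrite /A ji eqxx.
  move=> w [hb hc] m _; rewrite /A; case: ifPn => // _; case: ifPn => //.
move=> ->.
rewrite (bigD1 i) //= (bigD1 j) ?ji //= big1 ?mule1.
  by rewrite /A eqxx ji eqxx.
by move=> m /andP [mi mj]; rewrite /A (negbTE mi) (negbTE mj) probability_setT.
Qed.

Section entry.
Local Open Scope ereal_scope.
Context (R : realType) (dT : measure_display) (T : measurableType dT) (P : probability T R).

Lemma intDE (f1 f2 : T -> R) : P.-integrable setT (fun w => (f1 w)%:E) ->
  P.-integrable setT (fun w => (f2 w)%:E) ->
  \int[P]_w ((f1 w + f2 w)%R%:E) = \int[P]_w (f1 w)%:E + \int[P]_w (f2 w)%:E.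
Proof.
move=> i1 i2; rewrite -(integralD_EFin measurableT i1 i2).
by apply: eq_integral => w _; rewrite EFinD.
Qed.

Lemma intDI (f1 f2 : T -> R) : P.-integrable setT (fun w => (f1 w)%:E) ->
  P.-integrable setT (fun w => (f2 w)%:E) ->
  P.-integrable setT (fun w => (f1 w + f2 w)%R%:E).
Proof.
move=> i1 i2; apply: (eq_integrable _ _ _ _ (integrableD measurableT i1 i2)) => //.
Qed.

Lemma intZE (c : R) (f : T -> R) : P.-integrable setT (fun w => (f w)%:E) ->
  \int[P]_w ((c * f w)%R%:E) = c%:E * \int[P]_w (f w)%:E.
Proof.
by move=> i1; rewrite -integralZl.
Qed.

Lemma intZI (c : R) (f : T -> R) : P.-integrable setT (fun w => (f w)%:E) ->
  P.-integrable setT (fun w => (c * f w)%R%:E).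
Proof.
move=> i1; apply: (eq_integrable _ _ _ _ (integrableZl measurableT c i1)) => //.
Qed.

Lemma intcI (c : R) : P.-integrable setT (fun w : T => c%:E).
Proof. exact: (finite_measure_integrable_cst P c measurableT). Qed.

Lemma intcE (c : R) : \int[P]_(w in setT) c%:E = c%:E.
Proof. rewrite integral_cst // -[RHS]mule1; congr (_ * _); exact: probability_setT. Qed.

End entry.

Lemma EHHt_off (R : realType) (dT : measure_display) (T : measurableType dT)
  (P : probability T R) (n k d : nat)
  (mu : 'I_k -> 'I_d -> R) (sigma : 'I_n -> 'I_k) (g : 'I_n -> 'I_d -> T -> R) (i j : 'I_n) :
  rv_family g -> mean_zero P g -> independent_vectors P g ->
  (forall i, subgaussian_vec P (g i)) -> i != j ->
  EHHt P mu sigma g i j = \sum_(l < d) mu (sigma i) l * mu (sigma j) l.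
Proof.
move=> rvg mz hI sg ij.
rewrite /EHHt mxE unlock.
pose F := fun (l : 'I_d) w => (mu (sigma i) l + g i l w) * (mu (sigma j) l + g j l w).
have he : forall w, (Hmat mu sigma g w *m (Hmat mu sigma g w)^T) i j = \sum_(l < d) F l w.
  by move=> w; rewrite !mxE; apply: eq_bigr => l _; rewrite !mxE.
have sq : forall i l, P.-integrable setT (fun w => (g i l w ^+ 2)%:E).
  by move=> i' l; apply: sq_int_of_subg => //; apply: rvg.
have i1 : forall i l, P.-integrable setT (fun w => (g i l w)%:E).
  by move=> i' l; apply: int_of_sq => //; apply: rvg.
have i2 : forall l, P.-integrable setT (fun w => (g i l w * g j l w)%:E).
  by move=> l; apply: int_of_sq2 => //; apply: rvg.
have e1 : forall i l, (\int[P]_w (g i l w)%:E = 0)%E.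
  by move=> i' l; have := mz i' l; rewrite unlock.
have e2 : forall l, (\int[P]_w (g i l w * g j l w)%:E = 0)%E.
  move=> l.
  pose X : {mfun T >-> R} := mfun_Sub (mem_set (rvg i l)).
  pose Y : {mfun T >-> R} := mfun_Sub (mem_set (rvg j l)).
  apply: (@indep_mul0 _ _ _ P X Y) => //=.
  - by move=> B C mB mC; apply: pair_indep.
have FE : forall l w, F l w = mu (sigma i) l * mu (sigma j) l +
   (mu (sigma i) l * g j l w + (mu (sigma j) l * g i l w + g i l w * g j l w)).
  by move=> l w; rewrite /F; ring.
have iF : forall l, P.-integrable setT (fun w => (F l w)%:E).
  move=> l; under eq_fun do rewrite FE.
  apply: intDI; first exact: intcI.
  apply: intDI; first exact: intZI.
  apply: intDI; first exact: intZI.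
  exact: i2.
have IF : forall l, (\int[P]_w (F l w)%:E = (mu (sigma i) l * mu (sigma j) l)%:E)%E.
  move=> l; under eq_integral do rewrite FE.
  rewrite intDE; [|exact: intcI|].
    rewrite intcE intDE; [|exact: intZI|].
      rewrite intZE // e1 mule0 intDE; [|exact: intZI|exact: i2].
      by rewrite intZE // e1 mule0 e2 !adde0.
    apply: intDI; [exact: intZI|exact: i2].
  apply: intDI; first exact: intZI.
  apply: intDI; [exact: intZI|exact: i2].
under eq_integral do rewrite he -sumEFin.
rewrite integral_sum //.
under eq_bigr do rewrite IF.
by rewrite sumEFin.
Qed.

Local Close Scope classical_set_scope.
Section det.
Variables (R : realType) (n k d : nat).
Variables (mu : 'I_k -> 'I_d -> R) (sigma : 'I_n -> 'I_k).

Lemma part_sum (G : 'I_n -> 'I_k -> R) :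
  \sum_(j < n) G j (sigma j) = \sum_(b < k) \sum_(j < n | sigma j == b) G j b.
Proof.
rewrite (partition_big sigma xpredT) //=; apply: eq_bigr => b _.
by apply: eq_bigr => j /eqP ->.
Qed.

Lemma block_sum (D : 'M[R]_n) (F : 'I_k -> 'I_k -> R) :
  \sum_(a < k) \sum_(b < k) Tblock sigma D a b * F a b =
  \sum_(i < n) \sum_(j < n) D i j * F (sigma i) (sigma j).
Proof.
transitivity (\sum_(i < n) (fun i a => \sum_(b < k) \sum_(j < n | sigma j == b) D i j * F a b) i (sigma i)); last first.
  apply: eq_bigr => i _ /=.
  by rewrite (part_sum (fun j b => D i j * F (sigma i) b)).
rewrite (part_sum (fun i a => \sum_(b < k) \sum_(j < n | sigma j == b) D i j * F a b)); apply: eq_bigr => a _.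
rewrite exchange_big; apply: eq_bigr => b _.
rewrite /Tblock mulr_suml; apply: eq_bigr => i _.
by rewrite mulr_suml.
Qed.


Lemma sqdistE a b : sqdist mu a b =
  \sum_(l < d) mu a l ^+ 2 + \sum_(l < d) mu b l ^+ 2 - 2 * \sum_(l < d) mu a l * mu b l.
Proof.
rewrite /sqdist mulr_sumr -big_split -sumrB /=; apply: eq_bigr => l _; ring.
Qed.

Lemma Dist2 a b : Dist mu a b ^+ 2 = sqdist mu a b.
Proof. by rewrite /Dist sqr_sqrtr // sumr_ge0 // => l _; rewrite sqr_ge0. Qed.

Lemma Dist_ge0 a b : 0 <= Dist mu a b.
Proof. exact: sqrtr_ge0. Qed.

Lemma Dist_min_ge0 : 0 <= Dist_min mu.
Proof.
have hm : 0 <= Dist_max mu by rewrite /Dist_max; apply: bigmax_ge_id.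
rewrite /Dist_min; apply: le_bigmin => // a _.
by apply: le_bigmin => // b _; apply: Dist_ge0.
Qed.

Lemma Dist_min_le a b : b != a -> Dist_min mu <= Dist mu a b.
Proof.
move=> ba; rewrite /Dist_min (bigminD1 a) // ge_min; apply/orP; left.
by rewrite (bigminD1 b) // ge_min lexx.
Qed.


Lemma det_main (Yh E : 'M[R]_n) :
  (2 <= k)%N -> (k %| n)%N -> (forall a : 'I_k, #|[set i | sigma i == a]| = (n %/ k)%N) ->
  sdp_feasible k Yh ->
  (forall i j, i != j -> E i j = \sum_(l < d) mu (sigma i) l * mu (sigma j) l) ->
  let D := Yh - Ystar R sigma in
  frob D E = - (1 / 2) * \sum_(a < k) \sum_(b < k | b != a) Tblock sigma D a b * Dist mu a b ^+ 2
  /\ - (1 / 2) * \sum_(a < k) \sum_(b < k | b != a) Tblock sigma D a b * Dist mu a b ^+ 2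
       <= - (1 / 4) * Dist_min mu ^+ 2 * l1norm D.
Proof.
move=> k2 kn hcard [hrow [hsym hpsd] hdiag hnn] hE D.
have hk : (0 < k)%N by apply: leq_trans k2.
have nk : n%:R / k%:R = (n %/ k)%:R :> R.
  by rewrite -{1}(divnK kn) natrM mulfK // pnatr_eq0 -lt0n.
have Dij : forall i j, D i j = Yh i j - (sigma i == sigma j)%:R.
  by move=> i j; rewrite !mxE.
have Dii : forall i, D i i = 0 by move=> i; rewrite Dij hdiag eqxx subrr.
have Ysym : forall i j, Yh j i = Yh i j.
  by move=> i j; have := congr1 (fun M : 'M[R]_n => M i j) hsym; rewrite mxE.
have Dsym : forall i j, D j i = D i j by move=> i j; rewrite !Dij Ysym eq_sym.
have rowsum : forall i, \sum_(j < n) D i j = 0.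
  move=> i; under eq_bigr do rewrite Dij.
  rewrite sumrB hrow nk.
  have -> : \sum_(j < n) ((sigma i == sigma j)%:R : R) = \sum_(j < n | sigma j == sigma i) 1.
    by rewrite [RHS]big_mkcond /=; apply: eq_bigr => j _; rewrite eq_sym; case: ifP.
  by rewrite sumr_const -(hcard (sigma i)) cardsE subrr.
have colsum : forall j, \sum_(i < n) D i j = 0.
  by move=> j; under eq_bigr do rewrite -Dsym; apply: rowsum.
have Yle1 : forall i j, Yh i j <= 1.
  move=> i j; have [->|ij] := eqVneq i j; first by rewrite hdiag.
  pose x : 'cV[R]_n := \col_a ((a == i)%:R - (a == j)%:R).
  have := hpsd x; rewrite !mxE.
  have inner : forall b, \sum_(a < n) (x^T) 0 a * Yh a b = Yh i b - Yh j b.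
    move=> b; under eq_bigr do rewrite !mxE mulrBl.
    by rewrite sumrB !sum_delta.
  under eq_bigr do rewrite mxE inner mxE mulrC mulrBl.
  rewrite sumrB !sum_delta !hdiag (Ysym j i).
  lra.
have Dle : forall i j, sigma i == sigma j -> D i j <= 0.
  by move=> i j h; rewrite Dij h subr_le0.
have Dge : forall i j, sigma i != sigma j -> 0 <= D i j.
  by move=> i j h; rewrite Dij (negbTE h) subr0.
pose Mf := fun a b => \sum_(l < d) mu a l * mu b l.
pose N := fun a => \sum_(l < d) mu a l ^+ 2.
pose S := \sum_(a < k) \sum_(b < k | b != a) Tblock sigma D a b * Dist mu a b ^+ 2.
have FE : frob D E = \sum_(i < n) \sum_(j < n) D i j * Mf (sigma i) (sigma j).
  apply: eq_bigr => i _; apply: eq_bigr => j _.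
  have [->|ij] := eqVneq i j; first by rewrite !Dii !mul0r.
  by rewrite hE.
have Daa : forall a, Dist mu a a ^+ 2 = 0.
  by move=> a; rewrite Dist2 /sqdist big1 // => l _; rewrite subrr expr0n.
have SE : S = \sum_(a < k) \sum_(b < k) Tblock sigma D a b * Dist mu a b ^+ 2.
  by apply: eq_bigr => a _; rewrite [in RHS](bigD1 a) //= Daa mulr0 add0r.
have S2 : S = \sum_(i < n) \sum_(j < n) D i j * Dist mu (sigma i) (sigma j) ^+ 2.
  by rewrite SE (block_sum D (fun a b => Dist mu a b ^+ 2)).
have e1 : \sum_(i < n) \sum_(j < n) D i j * N (sigma i) = 0.
  by apply: big1 => i _; rewrite -mulr_suml rowsum mul0r.
have e2 : \sum_(i < n) \sum_(j < n) D i j * N (sigma j) = 0.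
  by rewrite exchange_big; apply: big1 => j _; rewrite -mulr_suml colsum mul0r.
have S3 : S = -2 * frob D E.
  rewrite S2 FE.
  transitivity (\sum_(i < n) \sum_(j < n) (D i j * N (sigma i) + D i j * N (sigma j) - 2 * (D i j * Mf (sigma i) (sigma j)))).
    apply: eq_bigr => i _; apply: eq_bigr => j _.
    rewrite Dist2 sqdistE -/(N _) -/(N _) -/(Mf _ _); ring.
  under eq_bigr do rewrite sumrB big_split /=.
  rewrite sumrB big_split /= e1 e2 add0r.
  under eq_bigr do rewrite -mulr_sumr.
  rewrite -mulr_sumr; ring.
split; first by rewrite -/S S3; lra.
pose off := fun i j => ((sigma i != sigma j)%:R : R).
pose Q := \sum_(i < n) \sum_(j < n) off i j * D i j.
have GE : l1norm D = 2 * Q.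
  transitivity (\sum_(i < n) \sum_(j < n) (2 * (off i j * D i j) - D i j)).
    apply: eq_bigr => i _; apply: eq_bigr => j _.
    rewrite /off; case: (boolP (sigma i == sigma j)) => h /=.
      by rewrite ler0_norm ?Dle //; ring.
    by rewrite ger0_norm ?Dge //; ring.
  under eq_bigr do rewrite sumrB.
  rewrite sumrB [X in _ - X]big1 ?subr0 ?mulr_sumr; last by move=> i _; apply: rowsum.
  by apply: eq_bigr => i _; rewrite mulr_sumr.
have SQ : Dist_min mu ^+ 2 * Q <= S.
  have SE' : S = \sum_(a < k) \sum_(b < k) Tblock sigma D a b * (Dist mu a b ^+ 2 * (b != a)%:R).
    apply: eq_bigr => a _; rewrite big_mkcond; apply: eq_bigr => b _.
    by case: ifP => _; rewrite ?mulr1 ?mulr0.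
  rewrite SE' (block_sum D (fun a b => Dist mu a b ^+ 2 * (b != a)%:R)).
  rewrite /Q mulr_sumr; apply: ler_sum => i _; rewrite mulr_sumr; apply: ler_sum => j _.
  rewrite /off; case: (boolP (sigma i == sigma j)) => h /=.
    by rewrite mul0r mulr0 (eqP h) eqxx /= mulr0 mulr0.
  rewrite eq_sym h !mulr1 mul1r mulrC ler_wpM2l ?Dge //.
  rewrite lerXn2r ?nnegrE ?Dist_min_ge0 ?Dist_ge0 //.
  by apply: Dist_min_le; rewrite eq_sym.
rewrite -/S GE; lra.
Qed.

End det.

End Helpers.

Theorem proposition9 (R : realType) (dT : measure_display) (T : measurableType dT)
  (P : probability T R) (n k d : nat)
  (mu : 'I_k -> 'I_d -> R) (sigma : 'I_n -> 'I_k) (g : 'I_n -> 'I_d -> T -> R) :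
  (4 <= n)%N -> (2 <= k)%N -> (k %| n)%N ->
  (forall a : 'I_k, #|[set i | sigma i == a]| = (n %/ k)%N) ->
  rv_family g -> mean_zero P g -> independent_vectors P g ->
  (forall i, subgaussian_vec P (g i)) ->
  forall (w : T) (Yh : 'M[R]_n),
    sdp_optimal k (Amat mu sigma g w) Yh ->
    let D := Yh - Ystar R sigma in
    let gamma := l1norm D in
    let S4 := frob D (EHHt P mu sigma g) in
    S4 = - (1 / 2) * \sum_(a < k) \sum_(b < k | b != a) Tblock sigma D a b * Dist mu a b ^+ 2
    /\ - (1 / 2) * \sum_(a < k) \sum_(b < k | b != a) Tblock sigma D a b * Dist mu a b ^+ 2
       <= - (1 / 4) * Dist_min mu ^+ 2 * gamma.
Proof.
move=> n4 k2 kn hcard rvg mz hI sg w Yh [hfeas _].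
exact: (@Helpers.det_main R n k d mu sigma Yh (EHHt P mu sigma g) k2 kn hcard hfeas
  (fun i j ij => @Helpers.EHHt_off R dT T P n k d mu sigma g i j rvg mz hI sg ij)).
Qed.
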